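(* For every single-use two-way transducer there is $k\in\{1,2,\dots\}$ such that for every input $w$, the accepting run on $\vdash w\dashv$ (if it exists) has at most $k$ configurations whose head is at any given position.
   Context: Fix a countably infinite set $\mathbb A$ of atoms; polynomial orbit-finite sets are built from $\mathbb A$ and singletons by finite products and disjoint unions; equivariant means commuting with all bijections of $\mathbb A$. A two-way single-use transducer has polynomial orbit-finite alphabets $\Sigma,\Gamma$, finitely many states with initial $q_0$, finitely many registers with values in $\mathbb A+\bot$, and a deterministic transition function assigning to each state a question and, per answer, a next state and an action. Questions: an equivariant function $\Sigma+\{\vdash,\dashv\}\to\{\mathrm{yes},\mathrm{no}\}$ of the letter under the head; or equality of registers $r_1,r_2$ (reject if one is $\bot$), after which $r_1,r_2$ are set to $\bot$. Actions: store an equivariant function $\Sigma+\{\vdash,\dashv\}\to\mathbb A+\bot$ of the current letter in a register; append $f(r_1,\dots,r_k)$ to the output for equivariant $f:\mathbb A^k\to\Gamma$ and distinct registers, setting them to $\bot$ (reject if one is $\bot$); move the head left or right; accept or reject. A configuration consists of head position, state, register valuation and output so far; the run on $w$ starts on $\vdash$ of $\vdash w\dashv$ in $q_0$ with all registers $\bot$ and empty output; an accepting run is one ending with the accept action. *)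

(* Defs.v *)
From mathcomp Require Import all_boot.
Unset Printing Implicit Defensive.

(* Atoms: the countably infinite set nat.  A permutation of atoms is a
   bijection pi : nat -> nat (ssreflect's [bijective pi]). *)

(* Polynomial orbit-finite sets: syntax built from A, singletons (and the
   empty set = empty disjoint union) by finite products and disjoint unions. *)
Inductive pof := PEmpty | PUnit | PAtom | PProd of pof & pof | PSum of pof & pof.

Fixpoint pof_T (p : pof) : Type :=
  match p with
  | PEmpty => Empty_set
  | PUnit => unit
  | PAtom => nat
  | PProd a b => (pof_T a * pof_T b)%type
  | PSum a b => (pof_T a + pof_T b)%type
  end.

Fixpoint pof_act (p : pof) (pi : nat -> nat) : pof_T p -> pof_T p :=
  match p return pof_T p -> pof_T p with
  | PEmpty => fun x => x
  | PUnit => fun x => x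
  | PAtom => pi
  | PProd a b => fun x => (pof_act a pi x.1, pof_act b pi x.2)
  | PSum a b => fun x => match x with
                         | inl y => inl (pof_act a pi y)
                         | inr y => inr (pof_act b pi y)
                         end
  end.
Arguments pof_act : clear implicits.

Inductive letter (S : Type) := LMark | RMark | Sym of S.
Arguments LMark {S}. Arguments RMark {S}. Arguments Sym {S}.

Definition letter_act (p : pof) (pi : nat -> nat) (l : letter (pof_T p)) :
  letter (pof_T p) :=
  match l with
  | Sym a => Sym (pof_act p pi a)
  | LMark => LMark
  | RMark => RMark
  end.
Arguments letter_act {p}.

Definition eqv_test (S : pof) (f : letter (pof_T S) -> bool) : Prop :=
  forall pi, bijective pi -> forall l, f (letter_act pi l) = f l.
Definition eqv_load (S : pof) (g : letter (pof_T S) -> option nat) : Prop :=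
  forall pi, bijective pi -> forall l, g (letter_act pi l) = omap pi (g l).
(* A^k -> Gamma, with A^k represented by the lists of atoms of length k *)
Definition eqv_out (G : pof) (k : nat) (f : seq nat -> pof_T G) : Prop :=
  forall pi, bijective pi -> forall l, size l = k ->
    f (map pi l) = pof_act G pi (f l).
Arguments eqv_test {S}. Arguments eqv_load {S}. Arguments eqv_out {G}.

Set Implicit Arguments.
Section Transducer.
Variables (S G : pof) (Q R : finType).

Inductive question :=
  | QLetter of (letter (pof_T S) -> bool)
  | QEq of R & R.

Inductive action :=
  | AStore of (letter (pof_T S) -> option nat) & R
  | AOut of seq R & (seq nat -> pof_T G)
  | ALeft | ARight | AAccept | AReject.

Definition transition := Q -> question * (bool -> Q * action).

Definition wf_question (qu : question) : Prop :=
  match qu with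
  | QLetter f => eqv_test f
  | QEq _ _ => True
  end.

Definition wf_action (a : action) : Prop :=
  match a with
  | AStore g _ => eqv_load g
  | AOut rs f => uniq rs /\ eqv_out (size rs) f
  | _ => True
  end.

Definition wf_transition (delta : transition) : Prop :=
  forall q, wf_question (delta q).1 /\ forall b, wf_action ((delta q).2 b).2.

Record config := Config {
  pos : nat;
  state : Q;
  val : R -> option nat;
  out : seq (pof_T G) }.

Inductive outcome := Next of config | Acc | Rej.

(* Tape |- w -| : position 0 is |-, positions 1..size w are the letters of w,
   position size w + 1 is -|. *)
Definition tape (w : seq (pof_T S)) (i : nat) : letter (pof_T S) :=
  if i == 0 then LMark
  else match onth w i.-1 with Some a => Sym a | None => RMark end.

Definition upd (v : R -> option nat) (r : R) (x : option nat) : R -> option nat :=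
  fun r' => if r' == r then x else v r'.

Definition clear (v : R -> option nat) (rs : seq R) : R -> option nat :=
  fun r' => if r' \in rs then None else v r'.

Definition step (delta : transition) (w : seq (pof_T S)) (c : config) : outcome :=
  let (qu, tr) := delta (state c) in
  let ans : option (bool * (R -> option nat)) :=
    match qu with
    | QLetter f => Some (f (tape w (pos c)), val c)
    | QEq r1 r2 =>
        match val c r1, val c r2 with
        | Some a1, Some a2 =>
            Some (a1 == a2, upd (upd (val c) r1 None) r2 None)
        | _, _ => None
        end
    end in
  match ans with
  | None => Rej
  | Some (b, v) =>
      let (q', a) := tr b in
      match a with
      | AStore g r => Next (Config (pos c) q' (upd v r (g (tape w (pos c)))) (out c))
      | AOut rs f =>
          if all (fun r => v r != None) rs then
            Next (Config (pos c) q' (clear v rs)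
                    (rcons (out c) (f (map (fun r => odflt 0 (v r)) rs))))
          else Rej
      | ALeft => if pos c is p.+1 then Next (Config p q' v (out c)) else Rej
      | ARight => if pos c < size w + 1 then Next (Config (pos c).+1 q' v (out c))
                  else Rej
      | AAccept => Acc
      | AReject => Rej
      end
  end.

Definition init_config (q0 : Q) : config := Config 0 q0 (fun _ => None) [::].

Fixpoint run_from (delta : transition) (w : seq (pof_T S)) (c : config)
    (cs : seq config) : Prop :=
  match cs with
  | [::] => step delta w c = Acc
  | c' :: cs' => step delta w c = Next c' /\ run_from delta w c' cs'
  end.

Definition accepting_run (q0 : Q) (delta : transition) (w : seq (pof_T S))
    (run : seq config) : Prop :=
  exists cs, run = init_config q0 :: cs /\ run_from delta w (init_config q0) cs.

End Transducer.

(* Main.v *)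
Require Import Defs.
From mathcomp Require Import all_boot zify.
Set Implicit Arguments.

Definition qregs (S : pof) (R : finType) (qu : question S R) : {set R} :=
  match qu with QEq r1 r2 => [set r1; r2] | _ => set0 end.
Definition aregs (S G : pof) (R : finType) (a : action S G R) : {set R} :=
  match a with AStore _ r => [set r] | AOut rs _ => [set r in rs] | _ => set0 end.

Definition answer (S G : pof) (Q R : finType) (delta : transition S G Q R)
  (w : seq (pof_T S)) (c : config G Q R) : bool :=
  match (delta (state c)).1 with
  | QLetter f => f (tape S w (pos c))
  | QEq r1 r2 => Defs.val c r1 == Defs.val c r2
  end.

Definition tregs (S G : pof) (Q R : finType) (delta : transition S G Q R)
  (w : seq (pof_T S)) (c : config G Q R) : {set R} :=
  qregs (delta (state c)).1 :|: aregs ((delta (state c)).2 (answer delta w c)).2.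

Definition isbit (S G : pof) (Q R : finType) (delta : transition S G Q R)
  (I : {set R}) (c : config G Q R) : bool :=
  match (delta (state c)).1 with
  | QEq r1 r2 => (r1 \in I) || (r2 \in I)
  | _ => false
  end.

Fixpoint beta (S G : pof) (Q R : finType) (delta : transition S G Q R)
  (w : seq (pof_T S)) (I : {set R}) (c : config G Q R) (cs : seq (config G Q R))
  : seq bool :=
  match cs with
  | [::] => [::]
  | c' :: cs' =>
      let rest := beta delta w (I :\: tregs delta w c) c' cs' in
      if isbit delta I c then answer delta w c :: rest else rest
  end.

Definition agree (G : pof) (Q R : finType) (I : {set R}) (c d : config G Q R) :=
  forall r, r \notin I -> Defs.val c r = Defs.val d r.

Lemma ag_upd (R : finType) (I : {set R}) (f g : R -> option nat) r x :
  (forall r', r' \notin I -> f r' = g r') ->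
  forall r', r' \notin I :\: [set r] -> upd R f r x r' = upd R g r x r'.
Proof.
move=> H r'; rewrite /upd !inE negb_and negbK.
by case: (r' =P r) => //= _ /H.
Qed.

Lemma ag_clear (R : finType) (I : {set R}) (f g : R -> option nat) rs :
  (forall r', r' \notin I -> f r' = g r') ->
  forall r', r' \notin I :\: [set r in rs] -> clear R f rs r' = clear R g rs r'.
Proof.
move=> H r'; rewrite /clear !inE negb_and negbK.
by case: (r' \in rs) => //= /H.
Qed.

Lemma ag_0 (R : finType) (I : {set R}) (f g : R -> option nat) :
  (forall r', r' \notin I -> f r' = g r') ->
  forall r', r' \notin I :\: set0 -> f r' = g r'.
Proof. by move=> H r'; rewrite setD0; exact: H. Qed.

Lemma sim (S G : pof) (Q R : finType) (delta : transition S G Q R)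
  (w : seq (pof_T S)) (I : {set R}) (c d : config G Q R) :
  pos c = pos d -> state c = state d -> agree I c d ->
  answer delta w c = answer delta w d ->
  step delta w c <> Rej _ _ _ -> step delta w d <> Rej _ _ _ ->
  (step delta w c = Acc _ _ _ /\ step delta w d = Acc _ _ _) \/
  exists c' d', step delta w c = Next c' /\ step delta w d = Next d' /\
    pos c' = pos d' /\ state c' = state d' /\ agree (I :\: tregs delta w c) c' d'.
Proof.
case: c => pc sc vc oc; case: d => pd sd vd od /= <- <- Hag.
rewrite /tregs /answer /step /=.
case: (delta sc) => qu tr /=.
case: qu => [f|r1 r2] /=.
- move=> _.
  case: (tr (f (tape S w pc))) => q' [g r|rs f'| | | |] /=; rewrite ?setU0 ?set0U.
  + move=> _ _; right; do 2 eexists; split; first reflexivity; split; first reflexivity.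
    do 2 split => //; move=> r' /=; rewrite /upd !inE negb_and negbK.
    by case: (r' =P r) => //= _ /Hag.
  + case: ifP; case: ifP => // _ _ _ _.
    right; do 2 eexists; split; first reflexivity; split; first reflexivity.
    do 2 split => //; move=> r' /=; rewrite /clear !inE negb_and negbK.
    by case: (r' \in rs) => //= /Hag.
  + case: pc Hag => [|p] Hag //= _ _; right; do 2 eexists; split; first reflexivity;
    split; first reflexivity; do 2 split => //; move=> r'; rewrite inE negb_and => /orP[|/Hag] //.
    by rewrite inE.
  + case: ifP => // _ _ _; right; do 2 eexists; split; first reflexivity;
    split; first reflexivity; do 2 split => //; move=> r'; rewrite inE negb_and => /orP[|/Hag] //.
    by rewrite inE.
  + by left.
  + by [].
- move=> Hans.
  case E1: (vc r1) => [a1|]; case E2: (vc r2) => [a2|] //;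
  case F1: (vd r1) => [b1|]; case F2: (vd r2) => [b2|] //.
  move: Hans; rewrite E1 E2 F1 F2 => Hans.
  have Hab : (a1 == a2) = (b1 == b2) by exact: Hans.
  rewrite -Hab; change (Some a1 == Some a2) with (a1 == a2).
  have Hv : forall r', r' \notin (I :\: [set r1; r2]) ->
     upd R (upd R vc r1 None) r2 None r' = upd R (upd R vd r1 None) r2 None r'.
    move=> r'; rewrite /upd !inE negb_and negbK.
    by case: (r' =P r2) => //= _; case: (r' =P r1) => //= _ /Hag.
  case: (tr (a1 == a2)) => q' [g r|rs f'| | | |] /=; rewrite -setDDl.
  + move=> _ _; right; do 2 eexists; split; first reflexivity; split; first reflexivity.
    do 2 split => //; exact: ag_upd Hv.
  + case: ifP; case: ifP => // _ _ _ _.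
    right; do 2 eexists; split; first reflexivity; split; first reflexivity.
    do 2 split => //; exact: ag_clear Hv.
  + case: pc Hag Hv => [|p] Hag Hv //= _ _; right; do 2 eexists; split; first reflexivity;
    split; first reflexivity; do 2 split => //; exact: ag_0 Hv.
  + case: ifP => // _ _ _; right; do 2 eexists; split; first reflexivity;
    split; first reflexivity; do 2 split => //; exact: ag_0 Hv.
  + by left.
  + by [].
Qed.

Lemma answer_eq (S G : pof) (Q R : finType) (delta : transition S G Q R)
  (w : seq (pof_T S)) (I : {set R}) (c d : config G Q R) :
  pos c = pos d -> state c = state d -> agree I c d ->
  (isbit delta I c -> answer delta w c = answer delta w d) ->
  answer delta w c = answer delta w d.
Proof.
case: c => pc sc vc oc; case: d => pd sd vd od /= <- <- Hag.
rewrite /answer /isbit /=; case: (delta sc) => [[f|r1 r2] tr] //=.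
case: (boolP ((r1 \in I) || (r2 \in I))) => [_ H|]; first exact: H.
by rewrite negb_or => /andP[H1 H2] _; move: (Hag _ H1) (Hag _ H2) => /= -> ->.
Qed.

Lemma isbit_eq (S G : pof) (Q R : finType) (delta : transition S G Q R)
  (I : {set R}) (c d : config G Q R) :
  state c = state d -> isbit delta I c = isbit delta I d.
Proof. by rewrite /isbit => ->. Qed.

Lemma tregs_eq (S G : pof) (Q R : finType) (delta : transition S G Q R)
  (w : seq (pof_T S)) (c d : config G Q R) :
  state c = state d -> answer delta w c = answer delta w d ->
  tregs delta w c = tregs delta w d.
Proof. by rewrite /tregs => -> ->. Qed.

Lemma run_nrej (S G : pof) (Q R : finType) (delta : transition S G Q R)
  (w : seq (pof_T S)) c cs : run_from delta w c cs -> step delta w c <> Rej _ _ _.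
Proof. by case: cs => [|c1 cs] /= => [->|[->]]. Qed.

Lemma lock (S G : pof) (Q R : finType) (delta : transition S G Q R)
  (w : seq (pof_T S)) cs : forall ds I (c d : config G Q R),
  run_from delta w c cs -> run_from delta w d ds -> pos c = pos d ->
  state c = state d -> agree I c d ->
  beta delta w I c cs = beta delta w I d ds -> size cs = size ds.
Proof.
elim: cs => [|c1 cs IH] [|d1 ds] I c d Hc Hd Hp Hs Hag /=; rewrite -?(@isbit_eq _ _ _ _ delta I c d Hs).
- by [].
- case: ifP => // Hb _.
  have Ha : answer delta w c = answer delta w d by apply: (@answer_eq _ _ _ _ delta w I c d Hp Hs Hag); rewrite Hb.
  have [[H1 H2]|[c' [d' [H1 [H2 _]]]]] := @sim _ _ _ _ delta w I c d Hp Hs Hag Ha (@run_nrej _ _ _ _ delta w _ _ Hc) (@run_nrej _ _ _ _ delta w _ _ Hd).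
    by move: Hd; rewrite /= H2 => -[].
  by move: Hc; rewrite /= H1.
- case: ifP => // Hb _.
  have Ha : answer delta w c = answer delta w d by apply: (@answer_eq _ _ _ _ delta w I c d Hp Hs Hag); rewrite Hb.
  have [[H1 H2]|[c' [d' [H1 [H2 _]]]]] := @sim _ _ _ _ delta w I c d Hp Hs Hag Ha (@run_nrej _ _ _ _ delta w _ _ Hc) (@run_nrej _ _ _ _ delta w _ _ Hd).
    by move: Hc; rewrite /= H1 => -[].
  by move: Hd; rewrite /= H2.
- move=> Hbeta.
  have [Ha Hrest] : answer delta w c = answer delta w d /\
     beta delta w (I :\: tregs delta w c) c1 cs = beta delta w (I :\: tregs delta w d) d1 ds.
    move: Hbeta; case: ifP => Hb.
      case=> Ha Hr; split => //; by rewrite -(@tregs_eq _ _ _ _ delta w c d Hs Ha).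
    move=> Hr; have Ha : answer delta w c = answer delta w d by apply: (@answer_eq _ _ _ _ delta w I c d Hp Hs Hag); rewrite Hb.
    by split => //; rewrite -(@tregs_eq _ _ _ _ delta w c d Hs Ha).
  have [[H1 H2]|[c' [d' [H1 [H2 [Hp' [Hs' Hag']]]]]]] :=
    @sim _ _ _ _ delta w I c d Hp Hs Hag Ha (@run_nrej _ _ _ _ delta w _ _ Hc) (@run_nrej _ _ _ _ delta w _ _ Hd).
    by move: Hc; rewrite /= H1 => -[].
  move: Hc Hd => /= [] Hc1 Hc [] Hd1 Hd.
  move: Hc1 Hd1; rewrite H1 H2 => -[Ec] [Ed]; subst c1 d1.
  rewrite -(@tregs_eq _ _ _ _ delta w c d Hs Ha) in Hrest.
  by rewrite (IH ds _ c' d' Hc Hd Hp' Hs' Hag' Hrest).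
Qed.

Lemma beta_size (S G : pof) (Q R : finType) (delta : transition S G Q R)
  (w : seq (pof_T S)) cs : forall I (c : config G Q R),
  size (beta delta w I c cs) <= #|I|.
Proof.
elim: cs => [|c1 cs IH] I c //=.
have Hsub : #|I :\: tregs delta w c| <= #|I| by apply: subset_leq_card; apply: subsetDl.
case: ifP => Hb /=; last exact: leq_trans (IH _ _) Hsub.
apply: leq_ltn_trans (IH _ _) _.
move: Hb; rewrite /isbit /tregs; case: (delta (state c)) => [[f|r1 r2] tr] //= Hb.
apply: proper_card; apply/properP; split; first exact: subsetDl.
by case/orP: Hb => Hr; [exists r1 | exists r2] => //; rewrite !inE Hr eqxx ?orbT.
Qed.

Lemma run_suffix (S G : pof) (Q R : finType) (delta : transition S G Q R)
  (w : seq (pof_T S)) cs : forall (c : config G Q R) i,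
  run_from delta w c cs -> i <= size cs ->
  run_from delta w (nth c (c :: cs) i) (drop i.+1 (c :: cs)).
Proof.
elim: cs => [|c1 cs IH] c [|i] //= H Hi.
rewrite (set_nth_default c1 c) /=; last by rewrite ltnS.
  by case: H => _ H; exact: (IH c1 i H Hi).
Qed.

Fixpoint allbits n : seq (seq bool) :=
  if n is n'.+1 then [::] :: [seq b :: s | b <- [:: true; false], s <- allbits n']
  else [:: [::]].

Lemma allbits_mem n s : size s <= n -> s \in allbits n.
Proof.
elim: n s => [|n IH] [|b s] //= H.
rewrite inE /= !mem_cat.
by case: b; [apply/orP; left | apply/orP; right; apply/orP; left]; apply: map_f; exact: IH.
Qed.

Theorem mainTheorem18 (S G : pof) (Q R : finType) (q0 : Q)
    (delta : transition S G Q R) (Hwf : wf_transition delta) :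
  exists k : nat, 0 < k /\
    forall (w : seq (pof_T S)) (run : seq (config G Q R)),
      accepting_run q0 delta w run ->
      forall p : nat, count (fun c => pos c == p) run <= k.
Proof.
set allS := [seq (q, s) | q <- enum Q, s <- allbits #|R|].
exists (size allS).+1; split => // w run [cs [-> Hrun]] p.
set x0 := init_config G Q R q0.
set L := x0 :: cs.
pose sig i := (state (nth x0 L i), beta delta w setT (nth x0 L i) (drop i.+1 L)).
pose idx := [seq i <- iota 0 (size L) | pos (nth x0 L i) == p].
have -> : count (fun c => pos c == p) L = size idx.
  by rewrite /idx -{1}(mkseq_nth x0 L) /mkseq count_map size_filter.
apply: leqW; rewrite -(size_map sig).
apply: uniq_leq_size.
- rewrite map_inj_in_uniq ?filter_uniq ?iota_uniq //.
  move=> i j; rewrite !mem_filter !mem_iota /= !add0n => /andP[/eqP Hpi Hi] /andP[/eqP Hpj Hj].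
  case=> Hst Hb.
  have Hri : run_from delta w (nth x0 L i) (drop i.+1 L) by apply: run_suffix.
  have Hrj : run_from delta w (nth x0 L j) (drop j.+1 L) by apply: run_suffix.
  have Hag : agree setT (nth x0 L i) (nth x0 L j) by move=> r; rewrite inE.
  have := @lock _ _ _ _ delta w _ _ setT _ _ Hri Hrj (etrans Hpi (esym Hpj)) Hst Hag Hb.
  rewrite !size_drop; move: Hi Hj; rewrite /L /= => Hi Hj; lia.
- move=> x /mapP[i _ ->]; apply: allpairs_f; first by rewrite mem_enum.
  apply: allbits_mem; apply: leq_trans (beta_size _ _ _ _ _) _; by rewrite cardsT.
Qed.
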